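(* Let $r\ge2$ and $h_a:=e_a-f_a\in\mathbb{K}[\mathcal{S}_{r+1}]$. Let $t$ be the standard Young tableau of frame $(2,1^{r-1})\vdash r+1$ whose first row is $1,\ r+1$ and whose first column is $1,2,\ldots,r$ (from top to bottom); this is the lexicographically greatest standard tableau of this frame. Then $h_a\cdot e_t=h_a$. Moreover, for every other standard tableau $t'$ of frame $(2,1^{r-1})$, $h_a\cdot e_{t'}=0$.
   Context: $\mathbb{K}\in\{\mathbb{R},\mathbb{C}\}$; group ring product $(p\cdot q)(i)=p(q(i))$. $\tilde{\mathcal S}_r=\{p\in\mathcal{S}_{r+1}:p(r+1)=r+1\}$, $e_a=\frac1{r!}\sum_{p\in\tilde{\mathcal S}_r}\mathrm{sign}(p)p$, $f_a=\frac1{(r+1)!}\sum_{p\in\mathcal{S}_{r+1}}\mathrm{sign}(p)p$. For a Young tableau $t$ (a filling of a Young frame with $1,\ldots,r+1$, each once), $\mathcal{H}_t$ and $\mathcal{V}_t$ are the groups of permutations preserving each row, respectively each column, of $t$; the Young symmetrizer is $y_t=\sum_{p\in\mathcal{H}_t}\sum_{q\in\mathcal{V}_t}\mathrm{sign}(q)\,p\cdot q$, and $e_t=\mu_ty_t$ with the nonzero constant $\mu_t$ making $e_t$ idempotent. A tableau is standard if entries increase along rows (left to right) and down columns. Lexicographic order: $t_2>t_1$ (same frame) if, reading both tableaux simultaneously row by row from left to right and top to bottom, the first position where they differ has a larger entry in $t_2$. The frame $(2,1^{r-1})$ has a first row of two boxes followed by $r-1$ rows of one box. *)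

(* Defs.v *)
From mathcomp Require Import all_boot all_order all_fingroup all_algebra.
From mathcomp Require Import zify.
Set Implicit Arguments.
Unset Strict Implicit.
Unset Printing Implicit Defensive.
Import GRing.Theory Num.Theory.
Local Open Scope ring_scope.

(* Group ring K[S_n]: finitely supported = all functions 'S_n -> K.
   Points {1,...,n} are represented 0-based by 'I_n. *)
Definition grp (K : numFieldType) (n : nat) := {ffun 'S_n -> K}.

Definition gelt (K : numFieldType) n (p : 'S_n) : grp K n :=
  [ffun s => (s == p)%:R].

(* Product convention of the paper: (p.q)(i) = p(q(i)), i.e. the
   composition "q first, then p", which in mathcomp is (q * p)%g.
   (a . b)(s) = sum over p.q = s of a(p) b(q); q = s * p^-1 in mathcomp. *)
Definition gmul (K : numFieldType) n (a b : grp K n) : grp K n :=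
  [ffun s => \sum_(p : 'S_n) a p * b (s * p^-1)%g].

Definition gscale (K : numFieldType) n (c : K) (a : grp K n) : grp K n :=
  [ffun s => c * a s].

Definition gsub (K : numFieldType) n (a b : grp K n) : grp K n :=
  [ffun s => a s - b s].

Definition gzero (K : numFieldType) n : grp K n := [ffun => 0].

Definition psign (K : numFieldType) n (p : 'S_n) : K := (-1) ^+ odd_perm p.

(* e_a = 1/r! sum_{p in S~_r} sign(p) p, where S~_r fixes the point r+1
   (0-based: ord_max). *)
Definition e_a (K : numFieldType) (r : nat) : grp K r.+1 :=
  [ffun p : 'S_(r.+1) => if p ord_max == ord_max then (r`!%:R)^-1 * psign K p else 0].

Definition f_a (K : numFieldType) (r : nat) : grp K r.+1 :=
  [ffun p : 'S_(r.+1) => ((r.+1)`!%:R)^-1 * psign K p].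

Definition h_a (K : numFieldType) (r : nat) : grp K r.+1 :=
  gsub (e_a K r) (f_a K r).

(* Boxes are indexed by
   'I_(r.+1) in reading order (row by row, left to right, top to bottom):
   box 0 = (row 0, col 0), box 1 = (row 0, col 1),
   box k (2 <= k <= r) = (row k-1, col 0). *)
Definition hrow r (b : 'I_(r.+1)) : nat := (nat_of_ord b).-1.
Definition hcol r (b : 'I_(r.+1)) : nat := (nat_of_ord b == 1)%N.

(* A Young tableau of this frame: a bijective filling of the boxes with
   the entries 1..r+1 (0-based: 'I_(r.+1)); T b is the entry in box b. *)
Definition tableau r := {perm 'I_(r.+1)}.

Definition row_group r (T : tableau r) : {set 'S_(r.+1)} :=
  [set p : 'S_(r.+1) | [forall i, hrow (T^-1%g (p i)) == hrow (T^-1%g i)]].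
Definition col_group r (T : tableau r) : {set 'S_(r.+1)} :=
  [set p : 'S_(r.+1) | [forall i, hcol (T^-1%g (p i)) == hcol (T^-1%g i)]].

Definition young_sym (K : numFieldType) r (T : tableau r) : grp K r.+1 :=
  [ffun s => \sum_(p in row_group T) \sum_(q in col_group T)
                if (q * p)%g == s then psign K q else 0].

Definition standard r (T : tableau r) : bool :=
  [forall b1, forall b2,
     ((hrow b1 == hrow b2) && (hcol b1 < hcol b2)%N ==> (T b1 < T b2)%N) &&
     ((hcol b1 == hcol b2) && (hrow b1 < hrow b2)%N ==> (T b1 < T b2)%N)].

Definition lex_gt r (T2 T1 : tableau r) : Prop :=
  exists b : 'I_(r.+1),
    (forall b' : 'I_(r.+1), (b' < b)%N -> T2 b' = T1 b') /\ (T1 b < T2 b)%N.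

(* The tableau t: first row 1, r+1; first column 1, 2, ..., r.
   0-based entries: box 0 -> 0, box 1 -> r, box k (k>=2) -> k-1. *)
Definition t_fun r (b : 'I_(r.+1)) : 'I_(r.+1) :=
  inord (if nat_of_ord b == 0%N then 0%N else if nat_of_ord b == 1%N then r else (nat_of_ord b).-1).
Definition t_inv r (j : 'I_(r.+1)) : 'I_(r.+1) :=
  inord (if nat_of_ord j == 0%N then 0%N else if nat_of_ord j == r then 1%N else (nat_of_ord j).+1).

Lemma t_fun_val r (b : 'I_(r.+1)) :
  nat_of_ord (t_fun b) =
  (if nat_of_ord b == 0%N then 0%N else if nat_of_ord b == 1%N then r else (nat_of_ord b).-1).
Proof.
rewrite /t_fun inordK //; have := ltn_ord b.
by case: eqP => // _; case: eqP => // _ hb; lia.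
Qed.

Lemma t_inv_val r (j : 'I_(r.+1)) :
  nat_of_ord (t_inv j) =
  (if nat_of_ord j == 0%N then 0%N else if nat_of_ord j == r then 1%N else (nat_of_ord j).+1).
Proof.
rewrite /t_inv inordK //; have := ltn_ord j.
case: eqP => // hj0; case: eqP => [hjr|hjr] hj; first by lia.
by lia.
Qed.

Lemma t_funK r : cancel (@t_fun r) (@t_inv r).
Proof.
move=> b; apply: ord_inj; rewrite t_inv_val t_fun_val.
case: b => [[|[|m]] hm] //=.
  by case: eqP => [hr|_]; [lia | rewrite eqxx].
by case: eqP => [|_]; lia.
Qed.

Definition t_hook r : tableau r := perm (can_inj (@t_funK r)).

Definition young_const (K : numFieldType) r (T : tableau r) (mu : K) : Prop :=
  mu != 0 /\
  gmul (gscale mu (young_sym K T)) (gscale mu (young_sym K T))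
  = gscale mu (young_sym K T).

Definition young_idem (K : numFieldType) r (T : tableau r) (mu : K) : grp K r.+1 :=
  gscale mu (young_sym K T).

(* Main.v *)
Require Import Defs.
From mathcomp Require Import all_boot all_order all_fingroup all_algebra.
From mathcomp Require Import zify ring.
Set Implicit Arguments.
Unset Strict Implicit.
Unset Printing Implicit Defensive.
Import GRing.Theory Num.Theory.

Local Open Scope ring_scope.

Lemma gmul_assoc (K : numFieldType) n (a b c : grp K n) :
  gmul (gmul a b) c = gmul a (gmul b c).
Proof.
apply/ffunP => s; rewrite !ffunE.
under eq_bigr => p _ do rewrite ffunE mulr_suml.
rewrite exchange_big /=; apply: eq_bigr => u _.
rewrite ffunE mulr_sumr (reindex_inj (mulIg u)) /=.
apply: eq_bigr => v _; rewrite mulgK mulrA; congr (_ * _ * c _).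
by rewrite invMg mulgA.
Qed.

Lemma psignM (K : numFieldType) n (p q : 'S_n) :
  psign K (p * q)%g = psign K p * psign K q.
Proof. by rewrite /psign odd_permM signr_addb. Qed.

Lemma psignV (K : numFieldType) n (p : 'S_n) : psign K p^-1%g = psign K p.
Proof. by rewrite /psign odd_permV. Qed.

Lemma psign_sq (K : numFieldType) n (p : 'S_n) : psign K p * psign K p = 1.
Proof. by rewrite /psign -signr_addb addbb. Qed.

Lemma psign_tperm (K : numFieldType) n (a b : 'I_n) : a != b ->
  psign K (tperm a b) = -1.
Proof. by move=> ab; rewrite /psign odd_tperm ab. Qed.

Lemma gmul_scale (K : numFieldType) n (a b : grp K n) (c : K) :
  gmul a (gscale c b) = gscale c (gmul a b).
Proof.
apply/ffunP => s; rewrite !ffunE mulr_sumr; apply: eq_bigr => p _.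
by rewrite ffunE mulrCA.
Qed.

Lemma gmul_ysym (K : numFieldType) r (T : tableau r) (h : grp K r.+1) s :
  gmul h (young_sym K T) s =
  \sum_(p in row_group T) \sum_(q in col_group T)
     psign K q * h (p^-1 * q^-1 * s)%g.
Proof.
rewrite ffunE.
under eq_bigr => x _ do rewrite ffunE mulr_sumr;
rewrite exchange_big; apply: eq_bigr => p _.
under eq_bigr => x _ do rewrite mulr_sumr;
rewrite exchange_big; apply: eq_bigr => q _.
rewrite (bigD1 (p^-1 * q^-1 * s)%g) //= big1 ?addr0.
  by rewrite !invMg !invgK !mulgA (mulgV s) mul1g eqxx mulrC.
move=> x hx; case: eqP; rewrite ?mulr0 // => e.
have ex : (x^-1 = s^-1 * (q * p))%g by rewrite e mulKg.
by move: hx; rewrite -[x]invgK ex !invMg invgK eqxx.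
Qed.


Lemma h_a_tperm (K : numFieldType) r (a b : 'I_r.+1) (x : 'S_r.+1) :
  a != b -> a != ord_max -> b != ord_max ->
  h_a K r (tperm a b * x)%g = - h_a K r x.
Proof.
move=> ab am bm; rewrite !ffunE permM tpermD; last 2 first.
1,2: by [].
rewrite /psign odd_permM odd_tperm ab /=.
by case: ifP => _; rewrite signrN !mulrN ?sub0r !opprK // opprB addrC.
Qed.

Lemma sum_anti (K : numFieldType) r (S : {set 'S_r.+1}) (sg : 'S_r.+1)
   (F : 'S_r.+1 -> K) :
  (forall p, ((p * sg)%g \in S) = (p \in S)) ->
  (forall p, F (p * sg)%g = - F p) ->
  \sum_(p in S) F p = 0.
Proof.
move=> hS hF.
have e : \sum_(p in S) F p = - \sum_(p in S) F p.
  rewrite {1}(reindex_inj (mulIg sg)) /= -sumrN.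
  by apply: eq_big => [p|p _]; [exact: hS | exact: hF].
have : (\sum_(p in S) F p) *+ 2 == 0 by rewrite mulr2n {1}e addNr.
by rewrite mulrn_eq0 /= => /eqP.
Qed.

Lemma row_mul r (T : tableau r) (p g : 'S_r.+1) :
  p \in row_group T -> g \in row_group T -> (p * g)%g \in row_group T.
Proof.
rewrite !inE => /forallP hp /forallP hg; apply/forallP => i.
by rewrite permM (eqP (hg (p i))) hp.
Qed.

Definition b1 r : 'I_r.+2 := inord 1.

Lemma b1_val r : nat_of_ord (b1 r) = 1%N.
Proof. by rewrite /b1 inordK. Qed.

Lemma tperm_row r (T : tableau r.+1) :
  tperm (T ord0) (T (b1 r)) \in row_group T.
Proof.
rewrite inE; apply/forallP => i.
case: tpermP => [->|->|_ _]; rewrite ?permK //.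
  by rewrite /hrow b1_val.
by rewrite /hrow b1_val.
Qed.

Lemma part2 (K : numFieldType) r (T : tableau r.+1) :
  T ord0 != T (b1 r) -> T ord0 != ord_max -> T (b1 r) != ord_max ->
  gmul (h_a K r.+1) (young_sym K T) = gzero K r.+2.
Proof.
move=> h01 h0 h1; apply/ffunP => s; rewrite gmul_ysym ffunE exchange_big /=.
apply: big1 => q _.
set sg := tperm (T ord0) (T (b1 r)).
apply: (sum_anti (sg := sg)).
  move=> p; apply/idP/idP => hp; last exact: row_mul (tperm_row T).
  have -> : p = (p * sg * sg)%g by rewrite /sg -{2}(tpermV (T ord0)) mulgK.
  exact: row_mul (tperm_row T).
move=> p; rewrite invMg /sg tpermV -!mulgA h_a_tperm //.
by rewrite !mulgA mulrN.
Qed.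

Local Close Scope ring_scope.

Lemma nat_squeeze (f : nat -> nat) n :
  (forall k, 2 <= k -> k < n -> f k < f k.+1) -> 1 <= f 2 -> f n <= n - 1 ->
  2 <= n -> forall k, 2 <= k <= n -> f k = k - 1.
Proof.
move=> hinc h2 hn n2.
have lo : forall k, 2 <= k <= n -> f 2 + (k - 2) <= f k.
  elim=> [|k IH]; first by move=> /andP[hk1 _].
  move=> /andP[hk1 hk2].
  case: (ltnP k 2) => hk.
    have e : k = 1 by lia.
    by rewrite e /= addn0.
  have := IH ltac:(lia). have := hinc k hk ltac:(lia). lia.
have up : forall d, d <= n - 2 -> f (n - d) + d <= f n.
  elim=> [|d IH] hd; first by rewrite subn0 addn0.
  have := IH ltac:(lia). have := hinc (n - d.+1) ltac:(lia) ltac:(lia).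
  have -> : (n - d.+1).+1 = n - d by lia.
  lia.
move=> k hk; have := lo k hk; have := up (n - k) ltac:(lia).
have -> : n - (n - k) = k by lia.
lia.
Qed.

Lemma std_row r (T : tableau r) b1 b2 : standard T ->
  hrow b1 = hrow b2 -> hcol b1 < hcol b2 -> T b1 < T b2.
Proof.
move=> /forallP /(_ b1) /forallP /(_ b2) /andP[h _] e l.
by apply: (implyP h); rewrite e eqxx l.
Qed.

Lemma std_col r (T : tableau r) b1 b2 : standard T ->
  hcol b1 = hcol b2 -> hrow b1 < hrow b2 -> T b1 < T b2.
Proof.
move=> /forallP /(_ b1) /forallP /(_ b2) /andP[_ h] e l.
by apply: (implyP h); rewrite e eqxx l.
Qed.

Lemma std_T0 r (T : tableau r.+1) : standard T -> nat_of_ord (T ord0) = 0.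
Proof.
move=> hs.
have lt : forall b : 'I_r.+2, b != ord0 -> T ord0 < T b.
  move=> b hb.
  have hb' : (0 < b)%N.
    rewrite lt0n; move: hb; apply: contra => /eqP e; apply/eqP; exact: val_inj.
  case: (ltnP b 2) => hb2.
    have e : nat_of_ord b = 1 by lia.
    by apply: std_row hs _ _; rewrite /hrow /hcol /= e.
  apply: std_col hs _ _; rewrite /hrow /hcol /=.
    by case: eqP => //; lia.
  lia.
case: (eqVneq (T^-1 ord0)%g ord0) => e.
  by rewrite -{1}e permKV.
by have := lt _ e; rewrite permKV.
Qed.

Lemma std_T1 r (T : tableau r.+1) : (1 <= r) -> standard T ->
  T (b1 r) = ord_max -> T = t_hook r.+1.
Proof.
move=> r1 hs e1.
pose f k := nat_of_ord (T (inord k)).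
have hinc : forall k, 2 <= k -> k < r.+1 -> f k < f k.+1.
  move=> k hk1 hk2; apply: std_col hs _ _; rewrite /hrow /hcol !inordK //; try lia.

have h2 : 1 <= f 2.
  have := std_T0 hs.
  have : T ord0 < T (inord 2).
    by apply: std_col hs _ _; rewrite /hrow /hcol !inordK //=; lia.
  rewrite /f; lia.
have hn : f r.+1 <= r.+1 - 1.
  have : T (inord r.+1) != ord_max.
    rewrite -e1; apply/eqP => /perm_inj /(congr1 (@nat_of_ord _)); rewrite b1_val inordK //; lia.
  rewrite /f; have := ltn_ord (T (inord r.+1)).
  move=> h1 /eqP h3; have : nat_of_ord (T (inord r.+1)) != r.+1.
    by apply/eqP => e; apply: h3; apply: val_inj.
  lia.
have sq := nat_squeeze hinc h2 hn ltac:(lia).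
apply/permP => b; apply: val_inj; rewrite /t_hook permE /= t_fun_val.
case: eqP => [b0|bn0].
  have -> : b = ord0 by apply: val_inj.
  exact: std_T0 hs.
case: eqP => [b1e|bn1].
  have -> : b = b1 r by apply: val_inj => /=; rewrite b1_val.
  by rewrite e1.
have := sq b ltac:(have := ltn_ord b; lia).
rewrite /f inord_val; lia.
Qed.

Lemma hook_std r : (1 <= r) -> standard (t_hook r.+1).
Proof.
move=> r1; apply/forallP => x; apply/forallP => y.
rewrite /t_hook !permE !t_fun_val /hrow /hcol.
have := ltn_ord x; have := ltn_ord y.
case: x => [x hx]; case: y => [y hy] /= _ _.

apply/andP; split; apply/implyP => /andP[/eqP h1 h2];
  move: h1 h2; case: eqP; case: eqP; case: eqP; case: eqP; lia.
Qed.

Lemma std_other r (T : tableau r.+1) : (1 <= r) -> standard T ->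
  T != t_hook r.+1 ->
  [/\ nat_of_ord (T ord0) = 0, nat_of_ord (T (b1 r)) < r.+1 &
      nat_of_ord (T (b1 r)) > 0].
Proof.
move=> r1 hs hT; split; first exact: std_T0.
  have := ltn_ord (T (b1 r)); rewrite ltnS leq_eqVlt => /orP[/eqP e|//].
  by move: hT; rewrite (std_T1 r1 hs) ?eqxx //; apply: val_inj.
have : T ord0 < T (b1 r).
  by apply: std_row hs _ _; rewrite /hrow /hcol b1_val.
by rewrite std_T0.
Qed.

Lemma lex_other r (T : tableau r.+1) : (1 <= r) -> standard T ->
  T != t_hook r.+1 -> lex_gt (t_hook r.+1) T.
Proof.
move=> r1 hs hT; have [h0 h1 _] := std_other r1 hs hT.
exists (b1 r); split.
  move=> b'; rewrite b1_val ltnS leqn0 => /eqP b0.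
  apply: val_inj; rewrite /t_hook permE /= t_fun_val b0 /=.
  by have -> : b' = ord0 by apply: val_inj.
by rewrite /t_hook permE /= t_fun_val b1_val.
Qed.


Ltac ec := repeat (match goal with |- context [?a == ?b] =>
  is_var a; case: (@eqP _ a b) => ? end; simpl; rewrite ?eqSS); try lia.

Lemma t_invK r : cancel (@t_inv r) (@t_fun r).
Proof.
move=> j; apply: val_inj => /=; rewrite t_fun_val t_inv_val.
have := ltn_ord j; case: j => [j hj] /= _.
by ec.
Qed.

Lemma hook_inv r (i : 'I_r.+1) : ((t_hook r)^-1)%g i = t_inv i.
Proof.
apply: (@perm_inj _ (t_hook r)); rewrite permKV /t_hook permE.
by rewrite t_invK.
Qed.

Lemma hook_col r (q : 'S_r.+2) :
  (q \in col_group (t_hook r.+1)) = (q ord_max == ord_max).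
Proof.
have hc : forall j : 'I_r.+2, hcol (t_inv j) = (j == ord_max).
  move=> j; rewrite /hcol t_inv_val; have := ltn_ord j.
  case: j => [j hj] /= _; rewrite -val_eqE /=.
  by ec.
rewrite inE; apply/forallP/idP => [/(_ ord_max)|/eqP h i].
  by rewrite !hook_inv !hc eqxx; case: (q ord_max == ord_max).
by rewrite !hook_inv !hc -{1}h (inj_eq perm_inj).
Qed.

Definition tau r : 'S_r.+2 := tperm ord0 ord_max.

Lemma hook_row r (p : 'S_r.+2) :
  (p \in row_group (t_hook r.+1)) = (p \in [set 1%g; tau r]).
Proof.
pose g (j : 'I_r.+2) : nat := if nat_of_ord j == 0 then 0 else if nat_of_ord j == r.+1 then 0 else nat_of_ord j.
have hg : forall j : 'I_r.+2, hrow (t_inv j) = g j.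
  move=> j; rewrite /hrow t_inv_val /g; have := ltn_ord j.
  case: j => [j hj] /= _.
  by ec.
rewrite inE !in_set2; apply/forallP/idP => [h|].
  have h' : forall i, g (p i) = g i by move=> i; have := h i; rewrite !hook_inv !hg => /eqP.
  have mid : forall i : 'I_r.+2, nat_of_ord i != 0 -> nat_of_ord i != r.+1 -> p i = i.
    move=> i i0 ir; apply: val_inj; have := h' i; rewrite /g /=.
    case: (p i) => a ha /=; case: i i0 ir => b hb /= /eqP i0 /eqP ir.
    by ec.
  have hne : nat_of_ord (p ord0) != nat_of_ord (p ord_max).
    by rewrite val_eqE (inj_eq perm_inj) -val_eqE /=.
  have [[v0 vR]|[v0 vR]] : (nat_of_ord (p ord0) = 0 /\ nat_of_ord (p ord_max) = r.+1) \/
      (nat_of_ord (p ord0) = r.+1 /\ nat_of_ord (p ord_max) = 0).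
    move: hne (h' ord0) (h' ord_max); rewrite /g /=.
    case: (p ord0) => a ha; case: (p ord_max) => b hb /= /eqP hab.
    by ec.
  - apply/orP; left; apply/eqP/permP => i; rewrite perm1; apply: val_inj.
    case: (eqVneq (nat_of_ord i) 0) => [i0|i0].
      by have -> : i = ord0 by apply: val_inj.
    case: (eqVneq (nat_of_ord i) r.+1) => [ir|ir].
      by have -> : i = ord_max by apply: val_inj.
    by rewrite mid.
  - apply/orP; right; apply/eqP/permP => i; rewrite /tau; apply: val_inj.
    case: (eqVneq (nat_of_ord i) 0) => [i0|i0].
      have -> : i = ord0 by apply: val_inj.
      by rewrite tpermL /= v0.
    case: (eqVneq (nat_of_ord i) r.+1) => [ir|ir].
      have -> : i = ord_max by apply: val_inj.
      by rewrite tpermR /= vR.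
    rewrite mid // tpermD //.
      by apply: contra i0 => /eqP <-.
    by apply: contra ir => /eqP <-.
move=> hp i; rewrite !hook_inv !hg; case/orP: hp => /eqP ->.
  by rewrite perm1.
rewrite /tau; case: tpermP => [->|->|_ _] //; by rewrite /g /= eqxx.
Qed.

Local Open Scope ring_scope.

Lemma card_fix n (A : {set 'I_n}) :
  #|[pred q : 'S_n | [forall x in A, q x == x]]| = (#|~: A|`!)%N.
Proof.
rewrite -card_perm; apply: eq_card => q; rewrite !inE; apply/idP/idP.
  move/forall_inP => h; apply/subsetP => x; rewrite !inE.
  by apply: contra; exact: h.
move/subsetP => h; apply/forall_inP => x xA.
by apply/negPn/negP => nx; have := h x; rewrite !inE xA => /(_ nx).
Qed.

Lemma termA (K : numFieldType) r (q s : 'S_r.+2) : q ord_max = ord_max ->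
  psign K q * h_a K r.+1 (q^-1 * s)%g = h_a K r.+1 s.
Proof.
move=> hq; have hq' : (q^-1)%g ord_max = ord_max by rewrite -{1}hq permK.
rewrite !ffunE permM hq' /psign odd_permM odd_permV signr_addb.
have e : forall x : K, (-1) ^+ q * ((-1) ^+ q * x) = x.
  by move=> x; rewrite mulrA -signr_addb addbb mul1r.
by rewrite mulrBr; case: ifP => _; rewrite ?mulr0 !(mulrCA ((-1) ^+ q)) !e.
Qed.

Lemma termB (K : numFieldType) r (q s : 'S_r.+2) :
  psign K q * h_a K r.+1 ((tau r)^-1 * q^-1 * s)%g =
  - (if s ((q^-1)%g ord0) == ord_max then ((r.+1)`!%:R)^-1 * psign K s else 0)
  + ((r.+2)`!%:R)^-1 * psign K s.
Proof.
rewrite !ffunE !permM /tau tpermV tpermR /psign !odd_permM !odd_permV odd_tperm.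
have -> : (ord0 != ord_max :> 'I_r.+2) = true by [].
move: (odd_perm q) (odd_perm s) => bq bs.
rewrite !signr_addb expr1.
have e : forall x : K, (-1) ^+ bq * ((-1) ^+ bq * x) = x.
  by move=> x; rewrite mulrA -signr_addb addbb mul1r.
rewrite mulrBr; case: ifP => _; rewrite ?mulr0 -!mulrA ?mulN1r !(mulrCA ((-1) ^+ bq)) ?mulrN !e.
  by rewrite opprK.
by rewrite sub0r oppr0 add0r opprK.
Qed.

Lemma card_V r : #|[pred q : 'S_r.+2 | q ord_max == ord_max]| = (r.+1)`!%N.
Proof.
have e : ((r.+1)`! = #|~: [set (ord_max : 'I_r.+2)]|`!)%N by rewrite cardsC1 card_ord.
rewrite e -card_fix; apply: eq_card => q; rewrite !inE.
apply/eqP/forall_inP => [h x|/(_ ord_max)]; first by rewrite inE => /eqP ->; rewrite h.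
by rewrite inE eqxx => /(_ isT) /eqP.
Qed.

Lemma card_V2 r :
  #|[pred q : 'S_r.+2 | (q ord_max == ord_max) && (q ord0 == ord0)]| = (r`!)%N.
Proof.
have -> : (r`! = #|~: [set (ord_max : 'I_r.+2); ord0]|`!)%N.
  congr (_ `!); have := cardsC [set (ord_max : 'I_r.+2); ord0]; rewrite cards2 card_ord.
  have -> : (ord_max != ord0 :> 'I_r.+2) = true by [].
  lia.
rewrite -card_fix; apply: eq_card => q; rewrite !inE.
apply/andP/forall_inP => [[/eqP h1 /eqP h2] x|h].
  by rewrite !inE => /orP[] /eqP ->; rewrite ?h1 ?h2.
by split; apply: h; rewrite !inE eqxx ?orbT.
Qed.

Lemma sum_cnt (K : numFieldType) r (s : 'S_r.+2) (u : K) :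
  \sum_(q : 'S_r.+2 | q ord_max == ord_max)
     (if s ((q^-1)%g ord0) == ord_max then u else 0) =
  if s ord_max == ord_max then 0 else u *+ r`!.
Proof.
case: ifP => hs.
  apply: big1 => q /eqP hq; case: ifP => // h.
  move: h; rewrite -{1}(eqP hs) (inj_eq perm_inj) => /eqP e.
  by have := congr1 (fun x => q x) e; rewrite /= permKV hq.
set k := (s^-1)%g ord_max.
have ck : forall q : 'S_r.+2, (s ((q^-1)%g ord0) == ord_max) = (q k == ord0).
  move=> q; apply/eqP/eqP => h.
    by rewrite /k -h permK permKV.
  by rewrite -h permK /k permKV.
have kR : k != ord_max by apply: contraFN hs => /eqP e; rewrite -{1}e /k permKV.
under eq_bigr => q _ do rewrite ck.
rewrite -big_mkcondr /=.
rewrite (reindex_inj (mulgI (tperm k ord0))) /=.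
under eq_bigl => q do rewrite !permM tpermL (tpermD kR) //.
rewrite -card_V2.
have -> : \sum_(q : 'S_r.+2 | (q ord_max == ord_max) && (q ord0 == ord0)) u =
   \sum_(q in [pred q : 'S_r.+2 | (q ord_max == ord_max) && (q ord0 == ord0)]) u by [].
by rewrite sumr_const.
Qed.


Lemma arith (K : numFieldType) (m f g : K) (b : bool) :
  f != 0 -> m + 1 != 0 -> m + 2 != 0 ->
  let a1 := (m + 1) * f in let a2 := (m + 2) * ((m + 1) * f) in
  let h := (if b then a1^-1 * g else 0) - a2^-1 * g in
  h * a1 + (- (if b then 0 else (a1^-1 * g) * f) + (a2^-1 * g) * a1) =
  ((m + 2) * f) * h.
Proof.
move=> f0 m1 m2; case: b => a1 a2 h; rewrite /h /a1 /a2.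
  rewrite oppr0 add0r; field; rewrite ?f0 ?m1 ?m2 //.
rewrite !add0r; field; rewrite ?f0 ?m1 ?m2 //.
Qed.

Lemma tau_neq1 r : (1%g : 'S_r.+2) != tau r.
Proof.
apply/eqP => /(congr1 (fun p : 'S_r.+2 => p ord0)) /=.
by rewrite perm1 /tau tpermL.
Qed.

Lemma hook_prod (K : numFieldType) r (s : 'S_r.+2) :
  gmul (h_a K r.+1) (young_sym K (t_hook r.+1)) s =
  ((r.+2 * r`!)%:R) * h_a K r.+1 s.
Proof.
rewrite gmul_ysym (eq_bigl _ _ (@hook_row r)) big_setU1 ?big_set1 /=; last first.
  by rewrite in_set1 tau_neq1.
rewrite !(eq_bigl _ _ (@hook_col r)) invg1.
have SA : \sum_(q : 'S_r.+2 | q ord_max == ord_max) psign K q * h_a K r.+1 (1 * q^-1 * s)%g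
   = h_a K r.+1 s * ((r.+1)`!)%:R.
  rewrite (eq_bigr (fun _ => h_a K r.+1 s)); last first.
    by move=> q /eqP hq; rewrite mul1g termA.
  rewrite -card_V.
  have -> : \sum_(q : 'S_r.+2 | q ord_max == ord_max) h_a K r.+1 s =
   \sum_(q in [pred q : 'S_r.+2 | q ord_max == ord_max]) h_a K r.+1 s by [].
  by rewrite sumr_const !mulr_natr.
have SB : \sum_(q : 'S_r.+2 | q ord_max == ord_max) psign K q * h_a K r.+1 ((tau r)^-1 * q^-1 * s)%g
   = - (if s ord_max == ord_max then 0 else (((r.+1)`!%:R)^-1 * psign K s) * (r`!)%:R)
     + (((r.+2)`!%:R)^-1 * psign K s) * ((r.+1)`!)%:R.
  rewrite (eq_bigr _ (fun q _ => termB K q s)) big_split /= sumrN sum_cnt.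
  rewrite -card_V.
  have -> : \sum_(q : 'S_r.+2 | q ord_max == ord_max) ((r.+2)`!%:R)^-1 * psign K s =
   \sum_(q in [pred q : 'S_r.+2 | q ord_max == ord_max]) ((r.+2)`!%:R)^-1 * psign K s by [].
  by rewrite sumr_const !mulr_natr.
rewrite SA SB.
have -> : h_a K r.+1 s = (if s ord_max == ord_max then ((r.+1)`!%:R)^-1 * psign K s else 0)
   - ((r.+2)`!%:R)^-1 * psign K s by rewrite !ffunE.
have e1 : (r.+1)%:R = (r%:R + 1 : K) by rewrite -addn1 natrD.
have e2 : (r.+2)%:R = (r%:R + 2 : K) by rewrite -addn2 natrD.
have f0 : (r`!%:R : K) != 0 by rewrite pnatr_eq0 -lt0n fact_gt0.
have m1 : (r%:R + 1 : K) != 0 by rewrite -e1 pnatr_eq0.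
have m2 : (r%:R + 2 : K) != 0 by rewrite -e2 pnatr_eq0.
rewrite !factS !natrM e1 e2.
move: (r%:R : K) (r`!%:R : K) (psign K s) (s ord_max == ord_max) f0 m1 m2.
move=> m f g [] f0 m1 m2.
  by rewrite oppr0 add0r; field; rewrite ?f0 ?m1 ?m2.
by rewrite !add0r; field; rewrite ?f0 ?m1 ?m2.
Qed.


Lemma gscale_mul (K : numFieldType) n (a b : grp K n) (c : K) :
  gmul (gscale c a) b = gscale c (gmul a b).
Proof.
apply/ffunP => s; rewrite !ffunE mulr_sumr; apply: eq_bigr => p _.
by rewrite ffunE mulrA.
Qed.

Lemma h_a1 (K : numFieldType) r : h_a K r.+1 1%g != 0.
Proof.
rewrite !ffunE perm1 eqxx /psign odd_perm1 expr0 !mulr1 subr_eq0.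
apply/negP => /eqP /invr_inj /eqP; rewrite eqr_nat (factS r.+1).
have := fact_gt0 r.+1; move: ((r.+1)`!) => x hx /eqP; lia.
Qed.

Theorem theorem4 (K : numFieldType) (r : nat) (hr : (2 <= r)%N) :
  standard (t_hook r) /\
  (forall T : tableau r, standard T -> T != t_hook r -> lex_gt (t_hook r) T) /\
  (forall mu : K, young_const (t_hook r) mu ->
     gmul (h_a K r) (young_idem (t_hook r) mu) = h_a K r) /\
  (forall (T : tableau r) (mu : K), standard T -> T != t_hook r ->
     young_const T mu -> gmul (h_a K r) (young_idem T mu) = gzero K r.+1).
Proof.
case: r hr => [//|r] hr; have r1 : (1 <= r)%N by lia.
split; first exact: hook_std.
split; first by move=> T hs hT; apply: lex_other.
split.
  move=> mu [mu0 hid].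
  set y := young_sym K (t_hook r.+1).
  set c : K := (r.+2 * r`!)%:R.
  have key : gmul (h_a K r.+1) (young_idem (t_hook r.+1) mu) = gscale (mu * c) (h_a K r.+1).
    rewrite /young_idem gmul_scale; apply/ffunP => s.
    by rewrite [LHS]ffunE hook_prod [RHS]ffunE mulrA.
  have c0 : c != 0 by rewrite pnatr_eq0 muln_eq0 negb_or /= -lt0n fact_gt0.
  have mc : mu * c = 1.
    have e := congr1 (gmul (h_a K r.+1)) hid.
    move: e; rewrite -gmul_assoc -/(young_idem _ _) key gscale_mul key.
    have h1 := h_a1 K r.
    move: (h_a K r.+1) h1 => h h1 /(congr1 (fun f : grp K r.+2 => f 1%g)).
    rewrite !ffunE mulrA => e0.
    have e := mulIf h1 e0.
    have nz : mu * c != 0 by rewrite mulf_neq0.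
    by apply: (mulIf nz); rewrite mul1r.
  rewrite key mc; apply/ffunP => s; by rewrite ffunE mul1r.
move=> T mu hs hT _.
have [h0 h1 h2] := std_other r1 hs hT.
rewrite /young_idem gmul_scale part2.
- by apply/ffunP => s; rewrite !ffunE mulr0.
- by rewrite -val_eqE /=; lia.
- by rewrite -val_eqE /=; lia.
- by rewrite -val_eqE /=; lia.
Qed.
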